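(* Let $\|\cdot\|$ be a Euclidean norm on $\mathbb{R}^d$ and $|\cdot|$ another norm on $\mathbb{R}^d$. Then there exists $\lambda<1$ (depending on the equivalence constants of the two norms) such that every curve $\gamma:I\to\mathbb{R}^d$ that is self-expanded with respect to $|\cdot|$ is a $\lambda$-curve with respect to $\|\cdot\|$.
   Context: $I\subset\mathbb{R}$ is an interval. A curve $\gamma:I\to\mathbb{R}^d$ is self-expanded with respect to a norm $|\cdot|$ if for all $t_1\le t_2\le t_3$ in $I$: $|\gamma(t_1)-\gamma(t_2)|\le|\gamma(t_1)-\gamma(t_3)|$. For $\lambda<1$, $\gamma$ is a $\lambda$-curve with respect to $\|\cdot\|$ if for all $t_1\le t_2\le t_3$ in $I$: $\|\gamma(t_1)-\gamma(t_2)\|\le\|\gamma(t_1)-\gamma(t_3)\|+\lambda\|\gamma(t_2)-\gamma(t_3)\|$. *)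

(* Defs.v *)
From HB Require Import structures.
From mathcomp Require Import all_boot all_order all_algebra.
From mathcomp Require Import reals.
Set Implicit Arguments. Unset Strict Implicit. Unset Printing Implicit Defensive.
Import Order.TTheory GRing.Theory Num.Theory.
Local Open Scope ring_scope.

Section Defs.
Variables (R : realType) (d : nat).

Definition is_norm (N : 'rV[R]_d -> R) : Prop :=
  [/\ (forall x, 0 <= N x),
      (forall x, N x = 0 -> x = 0),
      (forall (k : R) x, N (k *: x) = `|k| * N x) &
      (forall x y, N (x + y) <= N x + N y)].

Definition is_inner_product (B : 'rV[R]_d -> 'rV[R]_d -> R) : Prop :=
  [/\ (forall x y, B x y = B y x),
      (forall (k : R) x y z, B (k *: x + y) z = k * B x z + B y z) &
      (forall x, x != 0 -> 0 < B x x)].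

Definition is_euclidean_norm (N : 'rV[R]_d -> R) : Prop :=
  exists B, is_inner_product B /\ forall x, N x = Num.sqrt (B x x).

Definition is_interval (I : R -> Prop) : Prop :=
  forall s t u, I s -> I u -> s <= t -> t <= u -> I t.

Definition self_expanded (N : 'rV[R]_d -> R) (I : R -> Prop)
    (gamma : R -> 'rV[R]_d) : Prop :=
  forall t1 t2 t3, I t1 -> I t2 -> I t3 -> t1 <= t2 -> t2 <= t3 ->
    N (gamma t1 - gamma t2) <= N (gamma t1 - gamma t3).

Definition lambda_curve (lam : R) (N : 'rV[R]_d -> R) (I : R -> Prop)
    (gamma : R -> 'rV[R]_d) : Prop :=
  forall t1 t2 t3, I t1 -> I t2 -> I t3 -> t1 <= t2 -> t2 <= t3 ->
    N (gamma t1 - gamma t2)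
      <= N (gamma t1 - gamma t3) + lam * N (gamma t2 - gamma t3).

End Defs.

(* Main.v *)
Require Import Defs.
From HB Require Import structures.
From mathcomp Require Import all_boot all_order all_algebra.
From mathcomp Require Import reals.
From mathcomp Require Import ring lra.
Import Order.TTheory GRing.Theory Num.Theory.
Local Open Scope ring_scope.

Lemma arith (R : realType) (a b e r be : R) :
  0 < a -> 0 < b -> 0 <= e -> 0 <= r -> a * r <= 2 * b * e ->
  (e = 0 -> be = 0) ->
  (0 < be -> be^+2 * a^+2 * e^+2 <= b^+2 * e^+2 * (e^+2 * r^+2 - be^+2)) ->
  e^+2 + 2 * be + r^+2 <= (e + (1 - a^+3 / (2 * (a + 2 * b) * (a^+2 + b^+2))) * r)^+2.
Proof.
move=> a0 b0 e0 r0 Har Hz Hb.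
set s := a^+2 + b^+2.
have s0 : 0 < s by rewrite /s; nra.
have ab0 : 0 < a + 2 * b by lra.
set d := a^+3 / (2 * (a + 2 * b) * s).
have hd : d * (2 * (a + 2 * b) * s) = a^+3.
  rewrite /d mulfVK //; apply/eqP=> h; nra.
have d0 : 0 < d.
  rewrite /d divr_gt0 //; [exact: exprn_gt0 | nra].
set m := (a^+2 + 2 * b^+2) / (2 * s).
have hm : m * (2 * s) = a^+2 + 2 * b^+2.
  rewrite /m mulfVK //; apply/eqP=> h; nra.
have hdm : a - d * (a + 2 * b) = a * m.
  apply: (mulIf (x := 2 * s)); first by apply/eqP => h; nra.
  have -> : (a - d * (a + 2 * b)) * (2 * s) = a * (2 * s) - d * (2 * (a + 2 * b) * s) by ring.
  rewrite hd.
  have -> : a * m * (2 * s) = a * (m * (2 * s)) by ring.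
  rewrite hm /s; ring.
have m0 : 0 < m by nra.
have Hsq : b^+2 <= m^+2 * s.
  have h : (m * (2 * s))^+2 >= 4 * b^+2 * s.
    rewrite hm /s.
    have -> : (a ^+ 2 + 2 * b ^+ 2) ^+ 2 = 4 * b ^+ 2 * (a ^+ 2 + b ^+ 2) + a^+4 by ring.
    rewrite lerDl; exact: exprn_ge0 (ltW a0).
  move: h; have -> : (m * (2 * s))^+2 = 4 * s * (m^+2 * s) by ring.
  have -> : 4 * b^+2 * s = 4 * s * b^+2 by ring.
  by rewrite ler_pM2l //; nra.
case: (eqVneq e 0) => [ez|en].
  rewrite (Hz ez); rewrite ez in Har *.
  have -> : r = 0 by nra.
  lra.
have ep : 0 < e by rewrite lt0r en.
have key : (e + (1 - d) * r)^+2 - (e^+2 + r^+2) >= 2 * e * r * m.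
  have h1 : a * (d * r^+2) <= d * r * (2 * b * e).
    have dr0 : 0 <= d * r by nra.
    have := ler_wpM2l dr0 Har.
    by have -> : a * (d * r^+2) = d * r * (a * r) by ring.
  have h2 : (e + (1 - d) * r)^+2 - (e^+2 + r^+2) >= 2 * (1 - d) * e * r - 2 * d * r^+2 by nra.
  have h3 : a * (2 * (1 - d) * e * r - 2 * d * r^+2) >= 2 * e * r * (a - d * (a + 2 * b)) by nra.
  rewrite hdm in h3.
  nra.
suff : be <= e * r * m by lra.
have erm0 : 0 <= e * r * m by apply: mulr_ge0; [apply: mulr_ge0 | apply: ltW].
case: (lerP be 0) => hb; first by lra.
have := Hb hb => h.
have h' : be^+2 * s <= b^+2 * e^+2 * r^+2.
  have : e^+2 * (be^+2 * s) <= e^+2 * (b^+2 * e^+2 * r^+2) by rewrite /s; nra.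
  by rewrite ler_pM2l ?exprn_gt0.
have h'' : be^+2 <= (e * r * m)^+2.
  have : be^+2 * s <= (e * r * m)^+2 * s.
    apply: (le_trans h').
    have er0 : 0 <= e^+2 * r^+2 by rewrite mulr_ge0 // exprn_ge0.
    have := ler_wpM2l er0 Hsq.
    have -> : b ^+ 2 * e ^+ 2 * r ^+ 2 = e ^+ 2 * r ^+ 2 * b^+2 by ring.
    by have -> : (e * r * m) ^+ 2 * s = e ^+ 2 * r ^+ 2 * (m ^+ 2 * s) by ring.
  by rewrite ler_pM2r.
nra.
Qed.

Lemma triple (R : realType) (d : nat) (a b : R) (B : 'rV[R]_d -> 'rV[R]_d -> R)
  (N : 'rV[R]_d -> R) :
  0 < a -> 0 < b -> is_inner_product B -> is_norm N ->
  (forall x, a * Num.sqrt (B x x) <= N x /\ N x <= b * Num.sqrt (B x x)) ->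
  forall v w, N (v + w) <= N v ->
  Num.sqrt (B (v + w) (v + w)) <=
    Num.sqrt (B v v) + (1 - a^+3 / (2 * (a + 2 * b) * (a^+2 + b^+2))) * Num.sqrt (B w w).
Proof.
move=> a0 b0 [Bsym Blin Bpos] [N0 Nz NZ Ntri] Hab v w Hvw.
have B0l : forall z, B 0 z = 0.
  move=> z; have := Blin 1 0 0 z; rewrite scaler0 addr0 mul1r => h.
  have : B 0 z + B 0 z = B 0 z + 0 by rewrite -h addr0.
  by move/addrI.
have BDl : forall x y z, B (x + y) z = B x z + B y z.
  by move=> x y z; rewrite -[x]scale1r Blin mul1r scale1r.
have BZl : forall k x z, B (k *: x) z = k * B x z.
  by move=> k x z; rewrite -[k *: x]addr0 Blin B0l addr0.
have BNl : forall x z, B (- x) z = - B x z.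
  by move=> x z; rewrite -scaleN1r BZl mulN1r.
have BDr : forall x y z, B z (x + y) = B z x + B z y.
  by move=> x y z; rewrite Bsym BDl (Bsym x) (Bsym y).
have BZr : forall k x z, B z (k *: x) = k * B z x.
  by move=> k x z; rewrite Bsym BZl Bsym.
have BNr : forall x z, B z (- x) = - B z x.
  by move=> x z; rewrite Bsym BNl Bsym.
have Bpsd : forall x, 0 <= B x x.
  move=> x; case: (eqVneq x 0) => [->|hx]; first by rewrite B0l.
  exact: ltW (Bpos x hx).
have NN : forall x, N (- x) = N x.
  by move=> x; rewrite -scaleN1r NZ normrN normr1 mul1r.
set al := B v v; set be := B v w; set rr := B w w.
set e := Num.sqrt al; set r := Num.sqrt rr.
have e0 : 0 <= e by exact: sqrtr_ge0.
have r0 : 0 <= r by exact: sqrtr_ge0.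
have ee : e ^+ 2 = al by rewrite sqr_sqrtr // Bpsd.
have rre : r ^+ 2 = rr by rewrite sqr_sqrtr // Bpsd.
have Hsum : B (v + w) (v + w) = e^+2 + 2 * be + r^+2.
  rewrite ee rre BDl !BDr /al /be /rr (Bsym w v); ring.
have Har : a * r <= 2 * b * e.
  have h1 := (Hab w).1.
  have h2 : N w <= N (v + w) + N v.
    by have := Ntri (v + w) (- v); rewrite NN [v + w]addrC addrK.
  have h3 := (Hab v).2.
  rewrite -/r in h1; rewrite -/e in h3; lra.
have Hz : e = 0 -> be = 0.
  move=> ez; have : al = 0 by rewrite -ee ez expr0n.
  move=> a00; case: (eqVneq v 0) => [v0|vn]; first by rewrite /be v0 B0l.
  by have := Bpos v vn; rewrite -/al a00 ltxx.
have Hb : 0 < be -> be^+2 * a^+2 * e^+2 <= b^+2 * e^+2 * (e^+2 * r^+2 - be^+2).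
  move=> bep.
  set p := al *: w - be *: v.
  have Bp : B p p = e^+2 * (e^+2 * r^+2 - be^+2).
    rewrite ee rre /p !BDl !BDr !BNl !BNr !BZl !BZr -/al -/be -/rr (Bsym w v) -/be; ring.
  have hsplit : (al + be) *: v = al *: (v + w) + - p.
    by rewrite /p scalerDl scalerDr opprB [be *: v - _]addrC addrA addrK.
  have hN1 : (al + be) * N v <= al * N (v + w) + N p.
    have al0 : 0 <= al by exact: Bpsd.
    have := Ntri (al *: (v + w)) (- p); rewrite -hsplit NN !NZ.
    rewrite (ger0_norm al0) ger0_norm //.
    by apply: addr_ge0 => //; apply: ltW.
  have al0 : 0 <= al by exact: Bpsd.
  have hN2 : al * N (v + w) <= al * N v by rewrite ler_wpM2l.
  have hN3 : be * N v <= N p by lra.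
  have hN4 := (Hab p).2.
  have hN5 := (Hab v).1.
  rewrite -/e in hN5.
  set sp := Num.sqrt (B p p) in hN4.
  have sp0 : 0 <= sp by exact: sqrtr_ge0.
  have spe : sp ^+ 2 = B p p by rewrite sqr_sqrtr // Bpsd.
  have X1 : 0 <= be * a * e by rewrite !mulr_ge0 // ltW.
  have X2 : be * a * e <= b * sp.
    apply: le_trans hN4; apply: le_trans hN3.
    rewrite -mulrA ler_wpM2l // ltW //.
  have X3 : (be * a * e)^+2 <= (b * sp)^+2.
    by rewrite ler_sqr // ?nnegrE // mulr_ge0 // ltW.
  move: X3; rewrite !exprMn spe Bp.
  by have -> : b ^+ 2 * (e ^+ 2 * (e ^+ 2 * r ^+ 2 - be ^+ 2)) = b ^+ 2 * e ^+ 2 * (e ^+ 2 * r ^+ 2 - be ^+ 2) by ring.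
rewrite Hsum -/e -/r.
set lam := 1 - _.
have lam0 : 0 <= lam.
  rewrite /lam subr_ge0.
  have s0 : 0 < a^+2 + b^+2 by nra.
  rewrite ler_pdivrMr; last by nra.
  have -> : 1 * (2 * (a + 2 * b) * (a ^+ 2 + b ^+ 2)) =
    a^+3 + (a^+3 + 2 * a * b^+2 + 4 * a^+2 * b + 4 * b^+3) by ring.
  have q1 : 0 < a^+3 by exact: exprn_gt0.
  have q2 : 0 < b^+3 by exact: exprn_gt0.
  have q3 : 0 < a * b^+2 by rewrite mulr_gt0 // exprn_gt0.
  have q4 : 0 < a^+2 * b by rewrite mulr_gt0 // exprn_gt0.
  lra.
rewrite -(ger0_norm (x := e + lam * r)); last by rewrite addr_ge0 // mulr_ge0.
rewrite -sqrtr_sqr ler_sqrt; last exact: sqr_ge0.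
exact: arith a0 b0 e0 r0 Har Hz Hb.
Qed.

Theorem proposition2p2 (R : realType) (d : nat) (a b : R) :
  0 < a -> 0 < b ->
  exists lam : R, lam < 1 /\
    forall (E N : 'rV[R]_d -> R),
      is_euclidean_norm E -> is_norm N ->
      (forall x, a * E x <= N x /\ N x <= b * E x) ->
      forall (I : R -> Prop) (gamma : R -> 'rV[R]_d),
        is_interval I -> self_expanded N I gamma -> lambda_curve lam E I gamma.
Proof.
move=> a0 b0.
exists (1 - a^+3 / (2 * (a + 2 * b) * (a^+2 + b^+2))); split.
  have : 0 < a^+3 / (2 * (a + 2 * b) * (a^+2 + b^+2)).
    rewrite divr_gt0 //; first exact: exprn_gt0.
    apply: mulr_gt0; first (apply: mulr_gt0; lra).
    by apply: addr_gt0; exact: exprn_gt0.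
  lra.
move=> E N [B [HB HE]] HN Hab I g HI Hse t1 t2 t3 I1 I2 I3 h12 h23.
have Hab' : forall x, a * Num.sqrt (B x x) <= N x /\ N x <= b * Num.sqrt (B x x).
  by move=> x; rewrite -HE.
have Hs := Hse t1 t2 t3 I1 I2 I3 h12 h23.
have e1 : g t1 - g t2 = (g t1 - g t3) + (g t3 - g t2) by rewrite addrA subrK.
have e2 : g t2 - g t3 = - (g t3 - g t2) by rewrite opprB.
rewrite e1 in Hs *; rewrite e2 !HE.
have -> : B (- (g t3 - g t2)) (- (g t3 - g t2)) = B (g t3 - g t2) (g t3 - g t2).
  case: HB => Bsym Blin _.
  have B0l : forall z, B 0 z = 0.
    move=> z; have := Blin 1 0 0 z; rewrite scaler0 addr0 mul1r => h.
    have : B 0 z + B 0 z = B 0 z + 0 by rewrite -h addr0.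
    by move/addrI.
  have BNl : forall x z, B (- x) z = - B x z.
    by move=> x z; rewrite -scaleN1r -[_ *: x]addr0 Blin B0l addr0 mulN1r.
  by rewrite BNl Bsym BNl opprK.
exact: triple a0 b0 HB HN Hab' _ _ Hs.
Qed.
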